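(* Let $n\ge1$ and $Q\in\mathcal{Q}_n$. Then $Q$ is meet-irreducible in $(\mathcal{Q}_n,\le)$ if and only if $Q\in\mathcal{P}_n$ and $Q=Q(w)$ where $w\in S_n$ is of the form $w=w(i_1,i_2,i_3,i_4)$ for some integers $i_1,i_4\ge0$, $i_2,i_3\ge1$ with $i_1+i_2+i_3+i_4=n$. In particular, no proper quasi-copula (element of $\mathcal{Q}_n\setminus\mathcal{P}_n$) is meet-irreducible in $\mathcal{Q}_n$.
   Context: Fix $n\ge1$, $L_n=\{0,\dots,n\}$. $\mathcal{Q}_n$ is the set of irreducible discrete quasi-copulas: maps $Q:L_n\times L_n\to L_n$ (onto) with $Q(i,0)=Q(0,i)=0$, $Q(i,n)=Q(n,i)=i$, non-decreasing in each argument, and $Q(i,j)+Q(i',j')\ge Q(i,j')+Q(i',j)$ whenever $i\le i'$, $j\le j'$ and one of $i,i',j,j'$ lies in $\{0,n\}$. $\mathcal{P}_n\subseteq\mathcal{Q}_n$ is the subset of those satisfying this inequality for all $i\le i'$, $j\le j'$ (irreducible discrete copulas). Order: $P\le Q$ iff $P(i,j)\le Q(i,j)$ for all $i,j$. For $w\in S_n$, $Q(w)(r,s)=|\{i\le r: w(i)\le s\}|$ (and $0$ if $r=0$ or $s=0$); every element of $\mathcal{P}_n$ is $Q(w)$ for a unique $w$. An element $z$ of a finite poset $P$ is meet-irreducible if $z$ is not the maximum of $P$ and $z=x\wedge y$ implies $z=x$ or $z=y$. For integers $i_1,i_4\ge0$, $i_2,i_3\ge1$ with $i_1+i_2+i_3+i_4=n$,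 $w(i_1,i_2,i_3,i_4)\in S_n$ is defined by $w(i)=i$ for $1\le i\le i_1$, $w(i)=i+i_3$ for $i_1+1\le i\le i_1+i_2$, $w(i)=i-i_2$ for $i_1+i_2+1\le i\le i_1+i_2+i_3$, and $w(i)=i$ for $i_1+i_2+i_3+1\le i\le n$. *)

(* Defs.v *)
From mathcomp Require Import all_boot all_fingroup.
Set Implicit Arguments. Unset Strict Implicit. Unset Printing Implicit Defensive.

(* A map L_n x L_n -> L_n, L_n = {0..n}, represented as a finite function on
   ordinals 'I_n.+1 with values in nat (the codomain condition Q <= n is imposed
   in [quasi_copula]). *)
Definition qfun (n : nat) := {ffun 'I_n.+1 * 'I_n.+1 -> nat}.

(* value at natural indices i, j (meaningful for i, j <= n) *)
Definition qv (n : nat) (Q : qfun n) (i j : nat) : nat := Q (inord i, inord j).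

Definition in_bd (n k : nat) : bool := (k == 0) || (k == n).

Definition quasi_copula (n : nat) (Q : qfun n) : Prop :=
  [/\ (forall i j, i <= n -> j <= n -> qv Q i j <= n),
      (forall k, k <= n -> exists i j, [/\ i <= n, j <= n & qv Q i j = k]),
      (forall i, i <= n -> qv Q i 0 = 0 /\ qv Q 0 i = 0),
      (forall i, i <= n -> qv Q i n = i /\ qv Q n i = i) &
   [/\ (forall i i' j, i <= i' -> i' <= n -> j <= n -> qv Q i j <= qv Q i' j),
      (forall i j j', j <= j' -> j' <= n -> i <= n -> qv Q i j <= qv Q i j') &
      (forall i i' j j', i <= i' -> i' <= n -> j <= j' -> j' <= n ->
         [|| in_bd n i, in_bd n i', in_bd n j | in_bd n j'] ->
         qv Q i j' + qv Q i' j <= qv Q i j + qv Q i' j')]].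

Definition copula (n : nat) (Q : qfun n) : Prop :=
  quasi_copula Q /\
  (forall i i' j j', i <= i' -> i' <= n -> j <= j' -> j' <= n ->
         qv Q i j' + qv Q i' j <= qv Q i j + qv Q i' j').

Definition qle (n : nat) (P Q : qfun n) : Prop :=
  forall i j : 'I_n.+1, P (i, j) <= Q (i, j).

Definition is_meet (n : nat) (z x y : qfun n) : Prop :=
  [/\ quasi_copula z, qle z x, qle z y &
      forall u, quasi_copula u -> qle u x -> qle u y -> qle u z].

Definition meet_irreducible (n : nat) (z : qfun n) : Prop :=
  [/\ quasi_copula z,
      ~ (forall u, quasi_copula u -> qle u z) &
      forall x y, quasi_copula x -> quasi_copula y -> is_meet z x y ->
        z = x \/ z = y].

(* Q(w) for w in S_n; the ordinal i : 'I_n stands for the integer i+1, so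
   Q(w)(r,s) = |{ i in 1..n : i <= r, w(i) <= s }| *)
Definition Qw (n : nat) (w : 'S_n) : qfun n :=
  [ffun p : 'I_n.+1 * 'I_n.+1 =>
     #|[set i : 'I_n | (i < p.1) && (w i < p.2)]| ].

(* w(i1,i2,i3,i4) as a function on 1-based integers *)
Definition wfun (i1 i2 i3 i4 : nat) (i : nat) : nat :=
  if i <= i1 then i
  else if i <= i1 + i2 then i + i3
  else if i <= i1 + i2 + i3 then i - i2
  else i.

(* Main.v *)
Require Import Defs.
From mathcomp Require Import all_boot all_fingroup.
From mathcomp Require Import zify.
Set Implicit Arguments. Unset Strict Implicit. Unset Printing Implicit Defensive.

Section S.
Variable n : nat.
Implicit Types (Q u x y : qfun n).

Definition qc Q : Prop :=
 [/\ (forall i j, i <= n -> j <= n -> qv Q i j <= n),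
     (forall i, i <= n -> qv Q i 0 = 0 /\ qv Q 0 i = 0),
     (forall i, i <= n -> qv Q i n = i /\ qv Q n i = i),
     (forall i j, i < n -> j <= n -> qv Q i j <= qv Q i.+1 j <= (qv Q i j).+1) &
     (forall i j, j < n -> i <= n -> qv Q i j <= qv Q i j.+1 <= (qv Q i j).+1)].

Lemma qc_gen Q : qc Q ->
  (forall i i' j, i <= i' -> i' <= n -> j <= n ->
      qv Q i j <= qv Q i' j <= qv Q i j + (i' - i)) /\
  (forall i j j', j <= j' -> j' <= n -> i <= n ->
      qv Q i j <= qv Q i j' <= qv Q i j + (j' - j)).
Proof.
move=> [_ _ _ Hi Hj]; split.
- have G : forall d i j, i + d <= n -> j <= n -> qv Q i j <= qv Q (i+d) j <= qv Q i j + d.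
    elim=> [|d IH] i j h hj; first by rewrite !addn0 leqnn.
    rewrite addnS in h; have := IH i j (ltnW h) hj.
    have := Hi (i+d) j h hj; rewrite addnS; lia.
  move=> i i' j h1 h2 h3; have := G (i'-i) i j; rewrite subnKC //; move/(_ h2 h3); done.
- have G : forall d i j, j + d <= n -> i <= n -> qv Q i j <= qv Q i (j+d) <= qv Q i j + d.
    elim=> [|d IH] i j h hj; first by rewrite !addn0 leqnn.
    rewrite addnS in h; have := IH i j (ltnW h) hj.
    have := Hj i (j+d) h hj; rewrite addnS; lia.
  move=> i j j' h1 h2 h3; have := G (j'-j) i j; rewrite subnKC //; move/(_ h2 h3); done.
Qed.

Lemma quasi_qc Q : quasi_copula Q -> qc Q.
Proof.
move=> [Hb _ H0 Hn [Mi Mj I]]; split => //.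
- move=> i j hi hj; have := Mi i i.+1 j (leqnSn _) hi hj.
  have := I i i.+1 j n (leqnSn _) hi hj (leqnn _).
  rewrite /in_bd eqxx !orbT => /(_ isT).
  rewrite (proj1 (Hn i (ltnW hi))) (proj1 (Hn i.+1 hi)); lia.
- move=> i j hj hi; have := Mj i j j.+1 (leqnSn _) hj hi.
  have := I i n j j.+1 hi (leqnn _) (leqnSn _) hj.
  rewrite /in_bd eqxx !orbT => /(_ isT).
  rewrite (proj2 (Hn j (ltnW hj))) (proj2 (Hn j.+1 hj)); lia.
Qed.

Lemma qc_quasi Q : qc Q -> quasi_copula Q.
Proof.
move=> hq; have [Gi Gj] := qc_gen hq; case: hq => [Hb H0 Hn _ _]; split => //.
- move=> k hk; exists k, n; split => //; exact: (proj1 (Hn k hk)).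
- split.
  + move=> i i' j h1 h2 h3; by case/andP: (Gi i i' j h1 h2 h3).
  + move=> i j j' h1 h2 h3; by case/andP: (Gj i j j' h1 h2 h3).
  move=> i i' j j' hi hi' hj hj' hb.
  have hin : i <= n by apply: leq_trans hi hi'.
  have hjn : j <= n by apply: leq_trans hj hj'.
  have := Gi i i' j hi hi' hjn; have := Gi i i' j' hi hi' hj'.
  have := Gj i j j' hj hj' hin; have := Gj i' j j' hj hj' hi'.
  case/or4P: hb => /orP [] /eqP E.
  + rewrite E (proj2 (H0 _ hj')) (proj2 (H0 _ hjn)); lia.
  + have E' : i' = n by lia.
    rewrite E E' (proj2 (Hn _ hj')) (proj2 (Hn _ hjn)); lia.
  + have E' : i = 0 by lia.
    rewrite E E' (proj2 (H0 _ hj')) (proj2 (H0 _ hjn)); lia.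
  + rewrite E (proj2 (Hn _ hj')) (proj2 (Hn _ hjn)); lia.
  + rewrite E (proj1 (H0 _ hin)) (proj1 (H0 _ hi')); lia.
  + have E' : j' = n by lia.
    rewrite E E' (proj1 (Hn _ hin)) (proj1 (Hn _ hi')); lia.
  + have E' : j = 0 by lia.
    rewrite E E' (proj1 (H0 _ hin)) (proj1 (H0 _ hi')); lia.
  + rewrite E (proj1 (Hn _ hin)) (proj1 (Hn _ hi')); lia.
Qed.

End S.

Section S2.
Variable n : nat.
Implicit Types (Q u x y : qfun n).

Definition Mf (a b v : nat) : qfun n :=
  [ffun p : 'I_n.+1 * 'I_n.+1 => minn (minn p.1 p.2) (v + (p.1 - a) + (p.2 - b))].
Definition qmin x y : qfun n := [ffun p => minn (x p) (y p)].

Lemma qv_M a b v i j : i <= n -> j <= n ->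
  qv (Mf a b v) i j = minn (minn i j) (v + (i - a) + (j - b)).
Proof. by move=> hi hj; rewrite /qv ffunE /= !inordK. Qed.

Lemma qv_min x y i j : qv (qmin x y) i j = minn (qv x i j) (qv y i j).
Proof. by rewrite /qv ffunE. Qed.

Lemma qv_ord Q (i j : 'I_n.+1) : qv Q i j = Q (i, j).
Proof. by rewrite /qv !inord_val. Qed.

Lemma qext P Q : (forall i j, i <= n -> j <= n -> qv P i j = qv Q i j) -> P = Q.
Proof.
move=> H; apply/ffunP => -[i j]; rewrite -!qv_ord; apply: H; by rewrite -ltnS.
Qed.

Lemma qleP P Q : (forall i j, i <= n -> j <= n -> qv P i j <= qv Q i j) -> qle P Q.
Proof. move=> H i j; rewrite -!qv_ord; apply: H; by rewrite -ltnS. Qed.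

Lemma qleE P Q i j : qle P Q -> qv P i j <= qv Q i j.
Proof. by move=> H; apply: H. Qed.

Lemma Mf_qc a b v : a <= n -> b <= n -> a + b <= v + n -> qc (Mf a b v).
Proof.
move=> ha hb hv; split.
- move=> i j hi hj; rewrite qv_M //; lia.
- move=> i hi; rewrite !qv_M //; lia.
- move=> i hi; rewrite !qv_M //; lia.
- move=> i j hi hj; rewrite !qv_M //; lia.
- move=> i j hj hi; rewrite !qv_M //; lia.
Qed.

Lemma qmin_qc x y : qc x -> qc y -> qc (qmin x y).
Proof.
move=> [b1 z1 n1 i1 j1] [b2 z2 n2 i2 j2]; split.
- move=> i j hi hj; rewrite qv_min; have := b1 i j hi hj; have := b2 i j hi hj; lia.
- move=> i hi; rewrite !qv_min; have := z1 i hi; have := z2 i hi; lia.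
- move=> i hi; rewrite !qv_min; have := n1 i hi; have := n2 i hi; lia.
- move=> i j hi hj; rewrite !qv_min; have := i1 i j hi hj; have := i2 i j hi hj; lia.
- move=> i j hj hi; rewrite !qv_min; have := j1 i j hj hi; have := j2 i j hj hi; lia.
Qed.

Lemma qc_upper u i j : qc u -> i <= n -> j <= n -> qv u i j <= minn i j.
Proof.
move=> hq hi hj; have [Gi Gj] := qc_gen hq; case: hq => [_ _ Hn _ _].
have := Gi i n j hi (leqnn _) hj; have := Gj i j n hj (leqnn _) hi.
have := Hn i hi; have := Hn j hj; lia.
Qed.

Lemma qc_lower u a b : qc u -> a <= n -> b <= n -> a + b <= qv u a b + n.
Proof.
move=> hq ha hb; have [Gi Gj] := qc_gen hq; case: hq => [_ _ Hn _ _].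
have := Gj a b n hb (leqnn _) ha; have := Hn a ha; lia.
Qed.

Lemma le_M u a b v : qc u -> a <= n -> b <= n -> qv u a b <= v -> qle u (Mf a b v).
Proof.
move=> hq ha hb hv; apply: qleP => i j hi hj; rewrite qv_M //.
have hu := qc_upper hq hi hj.
have [Gi Gj] := qc_gen hq.
have h1 : i <= maxn i a by apply: leq_maxl.
have h2 : j <= maxn j b by apply: leq_maxl.
have h3 : a <= maxn i a by apply: leq_maxr.
have h4 : b <= maxn j b by apply: leq_maxr.
have hi2 : maxn i a <= n by rewrite geq_max hi ha.
have hj2 : maxn j b <= n by rewrite geq_max hj hb.
have := Gi i (maxn i a) j h1 hi2 hj.
have := Gj (maxn i a) j (maxn j b) h2 hj2 hi2.
have := Gi a (maxn i a) (maxn j b) h3 hi2 hj2.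
have := Gj a b (maxn j b) h4 hj2 ha.
lia.
Qed.

Lemma meet_min Q x y : quasi_copula Q -> Q = qmin x y -> is_meet Q x y.
Proof.
move=> hq E; split => //.
- by move=> i j; rewrite E ffunE geq_minl.
- by move=> i j; rewrite E ffunE geq_minr.
- by move=> u _ h1 h2 i j; rewrite E ffunE leq_min h1 h2.
Qed.

Lemma Qw_2inc (w : 'S_n) i i' j j' : i <= i' -> i' <= n -> j <= j' -> j' <= n ->
  qv (Qw w) i j' + qv (Qw w) i' j <= qv (Qw w) i j + qv (Qw w) i' j'.
Proof.
move=> hi hi' hj hj'.
have hin : i < n.+1 by rewrite ltnS (leq_trans hi hi').
have hjn : j < n.+1 by rewrite ltnS (leq_trans hj hj').
rewrite /qv /Qw !ffunE /= !inordK //.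
set A := [set k : 'I_n | (k < i) && (w k < j')].
set B := [set k : 'I_n | (k < i') && (w k < j)].
have EI : A :&: B = [set k : 'I_n | (k < i) && (w k < j)].
  apply/setP => k; rewrite !inE.
  case: (ltnP k i) => hk /=; case: (ltnP (w k) j) => hw /=;
  case: (ltnP (w k) j') => /=; case: (ltnP k i') => /=; lia.
have SU : A :|: B \subset [set k : 'I_n | (k < i') && (w k < j')].
  apply/subsetP => k; rewrite !inE => /orP [] /andP [h1 h2]; apply/andP; split.
  - exact: leq_trans h1 hi.
  - exact: h2.
  - exact: h1.
  - exact: leq_trans h2 hj.
have := cardsUI A B; rewrite EI => <-.
by rewrite addnC leq_add2l; apply: subset_leq_card SU.
Qed.

End S2.

Lemma wfun_cases i1 i2 i3 i4 k :
  [\/ k <= i1 /\ wfun i1 i2 i3 i4 k = k,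
      i1 < k <= i1 + i2 /\ wfun i1 i2 i3 i4 k = k + i3,
      i1 + i2 < k <= i1 + i2 + i3 /\ wfun i1 i2 i3 i4 k = k - i2 |
      i1 + i2 + i3 < k /\ wfun i1 i2 i3 i4 k = k].
Proof.
rewrite /wfun; case: ifP => h1; first by constructor 1.
case: ifP => h2; first by constructor 2; split => //; rewrite ?andbT ltnNge h1.
case: ifP => h3; first by constructor 3; split => //; rewrite ?andbT ltnNge h2.
by constructor 4; split => //; rewrite ltnNge h3.
Qed.

Lemma M_step n i1 i2 i3 i4 r s : i1+i2+i3+i4 = n -> 1 <= i2 -> 1 <= i3 -> r < n -> s <= n ->
  minn (minn r.+1 s) (i1 + (r.+1 - (i1+i2)) + (s - (i1+i3))) =
  minn (minn r s) (i1 + (r - (i1+i2)) + (s - (i1+i3))) +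
  (if wfun i1 i2 i3 i4 r.+1 <= s then 1 else 0).
Proof.
move=> E h2 h3 hr hs.
case: (wfun_cases i1 i2 i3 i4 r.+1) => -[? ->]; case: ifP => ?; lia.
Qed.

Lemma wfun_range n i1 i2 i3 i4 k : i1+i2+i3+i4 = n -> 1 <= k <= n ->
  1 <= wfun i1 i2 i3 i4 k <= n.
Proof.
move=> E hk.
case: (wfun_cases i1 i2 i3 i4 k) => -[? ->]; lia.
Qed.

Lemma wfun_inj n i1 i2 i3 i4 x y : i1+i2+i3+i4 = n -> 1 <= x <= n -> 1 <= y <= n ->
  wfun i1 i2 i3 i4 x = wfun i1 i2 i3 i4 y -> x = y.
Proof.
move=> E hx hy.
case: (wfun_cases i1 i2 i3 i4 x) => -[? ->]; case: (wfun_cases i1 i2 i3 i4 y) => -[? ->]; lia.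
Qed.

Lemma Qw_count n (w : 'S_n) i1 i2 i3 i4 : i1+i2+i3+i4 = n -> 1 <= i2 -> 1 <= i3 ->
  (forall i : 'I_n, (w i).+1 = wfun i1 i2 i3 i4 i.+1) ->
  forall r s, r <= n -> s <= n ->
  qv (Qw w) r s = minn (minn r s) (i1 + (r - (i1+i2)) + (s - (i1+i3))).
Proof.
move=> E h2 h3 Hw r s hr hs.
rewrite /qv /Qw ffunE /= !inordK ?ltnS //.
rewrite -sum1dep_card big_mkcond /=.
under eq_bigr => k _ do rewrite Hw.
rewrite -(big_mkord xpredT (fun k => if (k < r) && (wfun i1 i2 i3 i4 k.+1 <= s) then 1 else 0)).
rewrite (@big_cat_nat _ _ _ r 0 n) /= //.
rewrite [X in _ + X]big1_seq; last first.
  by move=> k /andP [_]; rewrite mem_iota => /andP [hk _]; rewrite ltnNge hk.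
rewrite addn0.
rewrite (eq_big_nat _ _ (F2 := fun k => if wfun i1 i2 i3 i4 k.+1 <= s then 1 else 0)); last first.
  by move=> k /andP [_ ->].
elim: r hr => [|r IH] hr; first by rewrite big_geq //; lia.
rewrite big_nat_recr //= IH ?(ltnW hr) //.
by rewrite (M_step E h2 h3 hr hs).
Qed.

Theorem mainTheorem5 (n : nat) (Q : qfun n) :
  1 <= n -> quasi_copula Q ->
  (meet_irreducible Q <->
   copula Q /\
   exists (w : 'S_n) (i1 i2 i3 i4 : nat),
     [/\ 1 <= i2, 1 <= i3, i1 + i2 + i3 + i4 = n,
         (forall i : 'I_n, (w i).+1 = wfun i1 i2 i3 i4 i.+1) &
         Q = Qw w]).
Proof.
move=> n1 Hq0; have hq := quasi_qc Hq0.
have hq0 := hq; case: hq0 => [_ H0 _ _ _].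
have topqc : qc (Mf n 0 0 0) by apply: Mf_qc.
have letop : forall u, qc u -> qle u (Mf n 0 0 0).
  move=> u hu; apply: le_M => //; case: hu => [_ Hu0 _ _ _].
  by rewrite (proj1 (Hu0 0 (leq0n _))).
split.
- case=> [_ Hnm Hirr].
  pose F := foldr (fun (p : 'I_n.+1 * 'I_n.+1) acc => qmin (Mf n p.1 p.2 (Q p)) acc) (Mf n 0 0 0).
  have Mpqc : forall p : 'I_n.+1 * 'I_n.+1, qc (Mf n p.1 p.2 (Q p)).
    move=> [a b] /=; have ha : (a <= n) by rewrite -ltnS.
    have hb : (b <= n) by rewrite -ltnS.
    apply: Mf_qc => //; rewrite -qv_ord; exact: qc_lower.
  have Fqc : forall s, qc (F s).
    elim=> [|p s IH] //=; exact: qmin_qc.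
  have key : forall s, Q = F s -> exists2 p, p \in s & Q = Mf n p.1 p.2 (Q p).
    elim=> [|p s IH] /= E.
    + exfalso; apply: Hnm => u hu; rewrite E; exact: letop (quasi_qc hu).
    + case: (Hirr _ _ (qc_quasi (Mpqc p)) (qc_quasi (Fqc s)) (meet_min Hq0 E)) => E'.
      * by exists p; rewrite ?mem_head.
      * have [q hqs E3] := IH E'; exists q => //; by rewrite in_cons hqs orbT.
  have Fge : forall s p, Q p <= F s p.
    elim=> [|q s IH] [i j] /=; first by apply: letop.
    rewrite ffunE leq_min (IH (i, j)) andbT.
    case: q => [a b] /=; apply: le_M => //; try by rewrite -ltnS.
    by rewrite qv_ord.
  have Fle : forall s p, p \in s -> F s p <= Q p.
    elim=> [|q s IH] p //=; rewrite in_cons => /orP [/eqP -> | hp]; rewrite ffunE.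
    + apply: leq_trans (geq_minl _ _) _; rewrite ffunE !subnn !addn0; exact: geq_minr.
    + exact: leq_trans (geq_minr _ _) (IH _ hp).
  have QF : Q = F (enum (@predT ('I_n.+1 * 'I_n.+1))).
    apply/ffunP => p; apply/eqP; rewrite eqn_leq Fge Fle //.
    by rewrite mem_enum.
  have [[a b] _ E] := key _ QF; rewrite /= in E.
  set v := Q (a, b) in E.
  have ha : (a <= n) by rewrite -ltnS.
  have hb : (b <= n) by rewrite -ltnS.
  have hup : v <= minn a b by rewrite /v -qv_ord; exact: qc_upper.
  have hlo : a + b <= v + n by rewrite /v -qv_ord; exact: qc_lower.
  have hlt : v < minn a b.
    rewrite ltn_neqAle hup andbT; apply/negP => /eqP hv.
    apply: Hnm => u hu; rewrite E; apply: le_M => //; first exact: quasi_qc.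
    rewrite hv; exact: qc_upper (quasi_qc hu) ha hb.
  set i1 := v; set i2 := a - v; set i3 := b - v; set i4 := n + v - a - b.
  have E4 : i1 + i2 + i3 + i4 = n by rewrite /i1 /i2 /i3 /i4; lia.
  have h2 : 1 <= i2 by rewrite /i2; lia.
  have h3 : 1 <= i3 by rewrite /i3; lia.
  have hf : forall k : 'I_n, (wfun i1 i2 i3 i4 k.+1).-1 < n.
    move=> k; have := @wfun_range n i1 i2 i3 i4 k.+1 E4; have := ltn_ord k; lia.
  pose f := fun k : 'I_n => Ordinal (hf k).
  have finj : injective f.
    move=> x y /(congr1 val) /= H; apply/val_inj => /=.
    have := @wfun_range n i1 i2 i3 i4 x.+1 E4.
    have := @wfun_range n i1 i2 i3 i4 y.+1 E4.
    have := @wfun_inj n i1 i2 i3 i4 x.+1 y.+1 E4.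
    have := ltn_ord x; have := ltn_ord y; lia.
  pose w := perm finj.
  have Hw : forall i : 'I_n, (w i).+1 = wfun i1 i2 i3 i4 i.+1.
    move=> i; rewrite permE /=; have := @wfun_range n i1 i2 i3 i4 i.+1 E4.
    have := ltn_ord i; lia.
  have QE : Q = Qw w.
    rewrite E; apply: qext => r s hr hs; rewrite qv_M // (Qw_count E4 h2 h3 Hw) //.
    rewrite /i1 /i2 /i3; lia.
  split.
  + split => // i i' j j' hi hi' hj hj'; rewrite QE; exact: Qw_2inc.
  + by exists w, i1, i2, i3, i4.
- case=> [[_ H2] [w [i1 [i2 [i3 [i4 [h2 h3 E4 Hw QE]]]]]]].
  have ha : i1 + i2 <= n by lia.
  have hb : i1 + i3 <= n by lia.
  have QM : Q = Mf n (i1 + i2) (i1 + i3) i1.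
    rewrite QE; apply: qext => r s hr hs; rewrite qv_M // (Qw_count E4 h2 h3 Hw) //.
  split => //.
  + move=> H; have := qleE (i1 + i2) (i1 + i3) (H _ (qc_quasi topqc)).
    rewrite QM !qv_M //; lia.
  + move=> x y hx hy [_ Qx Qy Hu].
    have hm : qle (qmin x y) Q.
      apply: Hu; first exact: qc_quasi (qmin_qc (quasi_qc hx) (quasi_qc hy)).
      * by move=> i j; rewrite ffunE geq_minl.
      * by move=> i j; rewrite ffunE geq_minr.
    have := qleE (i1 + i2) (i1 + i3) hm; rewrite qv_min QM qv_M // => hmin.
    case: (leqP (qv x (i1 + i2) (i1 + i3)) i1) => hxv.
    * left; have := le_M (quasi_qc hx) ha hb hxv; rewrite -QM => hxQ.
      by apply/ffunP => -[i j]; apply/eqP; rewrite eqn_leq Qx hxQ.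
    * right; have hyv : qv y (i1 + i2) (i1 + i3) <= i1 by lia.
      have := le_M (quasi_qc hy) ha hb hyv; rewrite -QM => hyQ.
      by apply/ffunP => -[i j]; apply/eqP; rewrite eqn_leq Qy hyQ.
Qed.
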